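(* Let $G=(V,E,A)$ be an undirected, unweighted attributed graph with attribute set $A=\{a,b\}$ (each vertex $v$ has one attribute $A(v)\in\{a,b\}$), let $color:V\to\mathbb{N}$ be a fixed proper vertex coloring of $G$ (adjacent vertices receive distinct colors), and let $k,\delta$ be integers. For a subgraph $H$ of $G$, an edge $(u,v)$ of $H$ and an attribute $x\in\{a,b\}$, let $$\overline{sup}^{H}_{x}(u,v)=\bigl|\{color(w)\;:\; w\in N_H(u)\cap N_H(v),\ A(w)=x\}\bigr|.$$ Let $G'$ be the maximal subgraph of $G$ such that for every edge $(u,v)$ of $G'$: (i) if $A(u)=A(v)=a$, then $\overline{sup}^{G'}_{a}(u,v)\ge k-2$ and $\overline{sup}^{G'}_{b}(u,v)\ge k$; (ii) if $A(u)=A(v)=b$, then $\overline{sup}^{G'}_{a}(u,v)\ge k$ and $\overline{sup}^{G'}_{b}(u,v)\ge k-2$; (iii) if $\{A(u),A(v)\}=\{a,b\}$, then $\overline{sup}^{G'}_{a}(u,v)\ge k-1$ and $\overline{sup}^{G'}_{b}(u,v)\ge k-1$. Then every $(k,\delta)$-relative fair clique of $G$ is contained in $G'$ (i.e., all its vertices and all edges among them belong to $G'$).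
   Context: For a vertex set $S$, $cnt_S(a)=|\{v\in S: A(v)=a\}|$ and $cnt_S(b)=|\{v\in S: A(v)=b\}|$. $N_H(u)$ denotes the set of neighbors of $u$ in $H$. A $(k,\delta)$-relative fair clique of $G$ is a clique $C$ of $G$ such that (1) $cnt_C(a)\ge k$, $cnt_C(b)\ge k$ and $|cnt_C(a)-cnt_C(b)|\le\delta$, and (2) there is no clique $C'\supsetneq C$ of $G$ satisfying (1). The quantity $\overline{sup}_x(u,v)$ is called the colorful support of edge $(u,v)$ with respect to attribute $x$. *)

(* Defs.v *)
From HB Require Import structures.
From mathcomp Require Import all_boot all_order all_algebra.
Set Implicit Arguments. Unset Strict Implicit. Unset Printing Implicit Defensive.
Import Order.TTheory GRing.Theory Num.Theory.

Inductive attr := attr_a | attr_b.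
Definition attr_eqb (x y : attr) : bool :=
  match x, y with attr_a, attr_a | attr_b, attr_b => true | _, _ => false end.
Lemma attr_eqP : Equality.axiom attr_eqb.
Proof. by case; case; constructor. Qed.
HB.instance Definition _ := hasDecEq.Build attr attr_eqP.

Section Defs.
Variable T : finType.

Definition cnt (A : T -> attr) (S : {set T}) (x : attr) : nat :=
  #|[set v in S | A v == x]|.

Definition is_clique (e : rel T) (C : {set T}) : Prop :=
  forall u v, u \in C -> v \in C -> u != v -> e u v.

Definition fair_cond (A : T -> attr) (k delta : int) (C : {set T}) : Prop :=
  (k <= (cnt A C attr_a)%:Z)%R /\ (k <= (cnt A C attr_b)%:Z)%R /\
  (`|(cnt A C attr_a)%:Z - (cnt A C attr_b)%:Z| <= delta)%R.

Definition relative_fair_clique (e : rel T) (A : T -> attr) (k delta : int)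
    (C : {set T}) : Prop :=
  is_clique e C /\ fair_cond A k delta C /\
  ~ (exists C' : {set T}, C \proper C' /\ is_clique e C' /\ fair_cond A k delta C').

(* A subgraph H = (VH, EH) of G = (T, e): undirected edges are stored as
   symmetric sets of ordered pairs. *)
Definition is_subgraph (e : rel T) (VH : {set T}) (EH : {set (T * T)}) : Prop :=
  (forall u v, (u, v) \in EH -> [/\ e u v, u \in VH, v \in VH & (v, u) \in EH]).

Definition nbr (EH : {set (T * T)}) (u : T) : {set T} := [set w | (u, w) \in EH].

Definition csup (A : T -> attr) (color : T -> nat) (EH : {set (T * T)})
    (x : attr) (u v : T) : nat :=
  size (undup [seq color w | w <- enum (nbr EH u :&: nbr EH v) & A w == x]).

Definition edge_cond (A : T -> attr) (color : T -> nat) (k : int)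
    (EH : {set (T * T)}) : Prop :=
  forall u v, (u, v) \in EH ->
    [/\ (A u = attr_a -> A v = attr_a ->
           (k - 2 <= (csup A color EH attr_a u v)%:Z)%R /\
           (k <= (csup A color EH attr_b u v)%:Z)%R),
        (A u = attr_b -> A v = attr_b ->
           (k <= (csup A color EH attr_a u v)%:Z)%R /\
           (k - 2 <= (csup A color EH attr_b u v)%:Z)%R)
      & (A u <> A v ->
           (k - 1 <= (csup A color EH attr_a u v)%:Z)%R /\
           (k - 1 <= (csup A color EH attr_b u v)%:Z)%R)].

Definition maximal_reduced (e : rel T) (A : T -> attr) (color : T -> nat) (k : int)
    (V' : {set T}) (E' : {set (T * T)}) : Prop :=
  [/\ is_subgraph e V' E', edge_cond A color k E' &
      forall (VH : {set T}) (EH : {set (T * T)}),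
        is_subgraph e VH EH -> edge_cond A color k EH ->
        V' \subset VH -> E' \subset EH -> VH = V' /\ EH = E'].

End Defs.

(* Main.v *)
Require Import Defs.
From mathcomp Require Import all_boot all_order all_algebra.
From mathcomp Require Import zify.
Import Order.TTheory GRing.Theory Num.Theory.

Lemma csup_mono (T : finType) (A : T -> attr) (color : T -> nat)
  (E1 E2 : {set (T * T)}) x u v :
  E1 \subset E2 -> (csup A color E1 x u v <= csup A color E2 x u v)%N.
Proof.
move=> sub; rewrite /csup; apply: uniq_leq_size; first exact: undup_uniq.
move=> c; rewrite !mem_undup => /mapP [w]; rewrite mem_filter => /andP [Hx].
rewrite mem_enum !inE => /andP [H1 H2] ->.
apply: map_f; rewrite mem_filter Hx mem_enum !inE.
by rewrite (subsetP sub _ H1) (subsetP sub _ H2).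
Qed.

Lemma csup_clique (T : finType) (e : rel T) (A : T -> attr) (color : T -> nat)
  (color_proper : forall u v, e u v -> color u != color v)
  (C : {set T}) (EH : {set (T * T)}) x u v :
  is_clique e C -> u \in C -> v \in C -> u != v ->
  (forall w w', w \in C -> w' \in C -> w != w' -> (w, w') \in EH) ->
  (cnt A C x <= csup A color EH x u v + (A u == x) + (A v == x))%N.
Proof.
move=> cl uC vC uv HE.
set S' := [set w in C | A w == x].
set S := S' :\ u :\ v.
have HS : (#|S| <= csup A color EH x u v)%N.
  rewrite cardE -(size_map color); apply: uniq_leq_size.
    rewrite map_inj_in_uniq ?enum_uniq // => w w'.
    rewrite !mem_enum !inE => /and4P [_ _ wC _] /and4P [_ _ w'C _] Hc.
    apply/eqP; apply: contraT => ww.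
    by move: (color_proper _ _ (cl _ _ wC w'C ww)); rewrite Hc eqxx.
  move=> c /mapP [w]; rewrite mem_enum !inE => /and4P [wv wu wC Hx] ->.
  rewrite mem_undup; apply: map_f; rewrite mem_filter Hx mem_enum !inE.
  rewrite !HE //; first by rewrite eq_sym.
  by rewrite eq_sym.
have E1 := cardsD1 u S'.
have E2 := cardsD1 v (S' :\ u).
have Hu : (u \in S') = (A u == x) by rewrite !inE uC.
have Hv : (v \in S' :\ u) = (A v == x) by rewrite !inE vC eq_sym uv.
rewrite /cnt -/S'; move: E1 E2 HS; rewrite Hu Hv -/S; lia.
Qed.

Theorem lemma3 (T : finType) (e : rel T) (A : T -> attr) (color : T -> nat)
    (k delta : int)
    (e_sym : symmetric e) (e_irr : irreflexive e)
    (color_proper : forall u v, e u v -> color u != color v)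
    (V' : {set T}) (E' : {set (T * T)})
    (HG' : maximal_reduced e A color k V' E')
    (C : {set T}) (HC : relative_fair_clique e A k delta C) :
  C \subset V' /\ (forall u v, u \in C -> v \in C -> u != v -> (u, v) \in E').
Proof.
case: HG' => Hsub Hec Hmax.
case: HC => cl [[ka [kb _]] _].
set EH := E' :|: [set p | [&& p.1 \in C, p.2 \in C & p.1 != p.2]].
set VH := V' :|: C.
have HEH : forall w w', w \in C -> w' \in C -> w != w' -> (w, w') \in EH.
  by move=> w w' wC w'C ww; rewrite !inE /= wC w'C ww orbT.
have sE : E' \subset EH by apply/subsetP => p; rewrite inE => ->.
have [] := Hmax VH EH.
- move=> u v; rewrite !inE /= => /orP [H|/and3P [uC vC uv]].
    by case: (Hsub _ _ H) => euv uV vV Hvu; rewrite uV vV Hvu.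
  by rewrite uC vC eq_sym uv cl // !orbT.
- move=> u v; rewrite {1}/EH inE => /orP [H|].
    have mono := fun x => @csup_mono _ A color _ _ x u v sE.
    case: (Hec _ _ H) => [H1 H2 H3]; split.
    + move=> au av; case: (H1 au av) => h1 h2; split.
        by apply: le_trans h1 _; rewrite lez_nat.
      by apply: le_trans h2 _; rewrite lez_nat.
    + move=> au av; case: (H2 au av) => h1 h2; split.
        by apply: le_trans h1 _; rewrite lez_nat.
      by apply: le_trans h2 _; rewrite lez_nat.
    + move=> auv; case: (H3 auv) => h1 h2; split.
        by apply: le_trans h1 _; rewrite lez_nat.
      by apply: le_trans h2 _; rewrite lez_nat.
  rewrite inE /= => /and3P [uC vC uv].
  have Ha := @csup_clique _ e A color color_proper C EH attr_a u v cl uC vC uv HEH.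
  have Hb := @csup_clique _ e A color color_proper C EH attr_b u v cl uC vC uv HEH.
  split.
  + move=> au av; move: Ha Hb; rewrite au av /=; split; lia.
  + move=> au av; move: Ha Hb; rewrite au av /=; split; lia.
  + move: Ha Hb; case: (A u); case: (A v) => //= Ha Hb _; split; lia.
- by apply/subsetP => w; rewrite inE => ->.
- exact: sE.
move=> HV HE; split.
  by rewrite -HV; apply/subsetP => w wC; rewrite inE wC orbT.
by move=> u v uC vC uv; rewrite -HE; apply: HEH.
Qed.
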